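(* For all integers $\alpha,\beta,\gamma,\delta,\epsilon$ with $\alpha,\gamma,\delta>0$, the map $$(h,j,k,m,n)\mapsto\big(\alpha\gamma^2\delta^2h+j\alpha\gamma^2\delta(\delta-1)/2,\ \alpha\gamma\delta j-\alpha\delta\epsilon k-\beta m,\ \alpha\gamma\delta k,\ \gamma m,\ \delta n\big)$$ is an injective group homomorphism from $\mathrm H_{5,3}$ into $\mathrm H_{5,3}(\alpha,\beta,\gamma,\delta,\epsilon)$. Consequently each $\mathrm H_{5,3}(\alpha,\beta,\gamma,\delta,\epsilon)$ (with parameters as in the classification of discrete cocompact subgroups of $\mathrm G_{5,3}$) is isomorphic to a subgroup of every other one.
   Context: For integers $\alpha,\beta,\gamma,\delta,\epsilon$, $\mathrm H_{5,3}(\alpha,\beta,\gamma,\delta,\epsilon)$ denotes $\mathbb Z^5$ with multiplication $$(h,j,k,m,n)(h',j',k',m',n')=\big(h+h'+\gamma nj'+\alpha\gamma m'n(n-1)/2+\beta nm'+\delta mk'+\epsilon nk',\ j+j'+\alpha nm',\ k+k',\ m+m',\ n+n'\big),$$ and $\mathrm H_{5,3}=\mathrm H_{5,3}(1,0,1,1,0)$. It is known (and may be used) that every $\mathrm H_{5,3}(\alpha,\beta,\gamma,\delta,\epsilon)$ with $\alpha,\gamma,\delta>0$ is isomorphic to a subgroup of $\mathrm H_{5,3}$. *)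

(* Defs.v *)
From Stdlib Require Import ZArith.
Open Scope Z_scope.

Definition Z5 : Type := (Z * Z * Z * Z * Z)%type.

(* Multiplication of H_{5,3}(alpha,beta,gamma,delta,epsilon).
   The divisions by 2 are exact (n(n-1) is even). *)
Definition H53mul (alpha beta gamma delta epsilon : Z) (x y : Z5) : Z5 :=
  let '(h, j, k, m, n) := x in
  let '(h', j', k', m', n') := y in
  (h + h' + gamma * n * j' + alpha * gamma * m' * (n * (n - 1) / 2)
     + beta * n * m' + delta * m * k' + epsilon * n * k',
   j + j' + alpha * n * m',
   k + k',
   m + m',
   n + n').

Definition H53std : Z5 -> Z5 -> Z5 := H53mul 1 0 1 1 0.

Definition is_hom (mul1 mul2 : Z5 -> Z5 -> Z5) (f : Z5 -> Z5) : Prop :=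
  forall x y, f (mul1 x y) = mul2 (f x) (f y).

Definition injective (f : Z5 -> Z5) : Prop :=
  forall x y, f x = f y -> x = y.

(* "isomorphic to a subgroup of": there is an injective homomorphism. *)
Definition embeds (mul1 mul2 : Z5 -> Z5 -> Z5) : Prop :=
  exists f, is_hom mul1 mul2 f /\ injective f.

Definition embed_map (alpha beta gamma delta epsilon : Z) (x : Z5) : Z5 :=
  let '(h, j, k, m, n) := x in
  (alpha * gamma ^ 2 * delta ^ 2 * h + j * (alpha * gamma ^ 2 * delta * (delta - 1) / 2),
   alpha * gamma * delta * j - alpha * delta * epsilon * k - beta * m,
   alpha * gamma * delta * k,
   gamma * m,
   delta * n).

(* Main.v *)
Require Import Defs.
From Stdlib Require Import ZArith Lia.
Open Scope Z_scope.

Lemma half_ex (n : Z) : exists q, n * (n - 1) = 2 * q.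
Proof.
  destruct (Zeven_odd_dec n) as [He|Ho].
  - apply Zeven_ex in He as [q Hq]; subst. exists (q * (2*q-1)); ring.
  - apply Zodd_ex in Ho as [q Hq]; subst. exists (q * (2*q+1)); ring.
Qed.

Lemma div2_eq (a q : Z) : a = 2 * q -> a / 2 = q.
Proof. intros ->. rewrite Z.mul_comm. apply Z.div_mul. lia. Qed.

Lemma hom_part alpha beta gamma delta epsilon :
  is_hom H53std (H53mul alpha beta gamma delta epsilon)
         (embed_map alpha beta gamma delta epsilon).
Proof.
  intros [[[[h j] k] m] n] [[[[h' j'] k'] m'] n'].
  unfold H53std, H53mul, embed_map.
  destruct (half_ex n) as [N HN]. destruct (half_ex delta) as [D HD].
  assert (E1 : n * (n - 1) / 2 = N) by (apply div2_eq; exact HN).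
  assert (E2 : alpha * gamma ^ 2 * delta * (delta - 1) / 2 = alpha * gamma ^ 2 * D)
    by (apply div2_eq; rewrite <- Z.mul_assoc, HD; ring).
  assert (E3 : delta * n * (delta * n - 1) / 2 = delta ^ 2 * N + n * D).
  { apply div2_eq.
    transitivity (delta ^ 2 * (n * (n - 1)) + n * (delta * (delta - 1))); [ring|].
    rewrite HN, HD; ring. }
  rewrite E1, E2, E3.
  f_equal; [f_equal; [f_equal; [f_equal|]|]|]; ring.
Qed.

Lemma inj_part alpha beta gamma delta epsilon :
  0 < alpha -> 0 < gamma -> 0 < delta ->
  injective (embed_map alpha beta gamma delta epsilon).
Proof.
  intros Ha Hg Hd [[[[h j] k] m] n] [[[[h' j'] k'] m'] n'].
  unfold embed_map. intros H. inversion H as [[H1 H2 H3 H4 H5]].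
  assert (Hn : n = n') by (apply (Z.mul_reg_l _ _ delta); lia).
  assert (Hm : m = m') by (apply (Z.mul_reg_l _ _ gamma); lia).
  assert (Hagd : alpha * gamma * delta <> 0) by (apply Z.neq_mul_0; split; [apply Z.neq_mul_0|]; lia).
  assert (Hk : k = k') by (apply (Z.mul_reg_l _ _ _ Hagd); lia).
  subst n' m' k'.
  assert (Hj : j = j') by (apply (Z.mul_reg_l _ _ _ Hagd); lia).
  subst j'.
  assert (Hc : alpha * gamma ^ 2 * delta ^ 2 <> 0)
    by (apply Z.neq_mul_0; split; [apply Z.neq_mul_0; split|]; try lia; apply Z.pow_nonzero; lia).
  assert (Hh : h = h') by (apply (Z.mul_reg_l _ _ _ Hc); lia).
  subst; reflexivity.
Qed.

Theorem mainTheorem2 :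
  forall alpha beta gamma delta epsilon : Z,
    0 < alpha -> 0 < gamma -> 0 < delta ->
    (is_hom H53std (H53mul alpha beta gamma delta epsilon)
            (embed_map alpha beta gamma delta epsilon)
     /\ injective (embed_map alpha beta gamma delta epsilon))
    /\
    ((forall a b c d e : Z, 0 < a -> 0 < c -> 0 < d ->
        embeds (H53mul a b c d e) H53std) ->
     forall a b c d e a' b' c' d' e' : Z,
       0 < a -> 0 < c -> 0 < d -> 0 < a' -> 0 < c' -> 0 < d' ->
       embeds (H53mul a b c d e) (H53mul a' b' c' d' e')).
Proof.
  intros alpha beta gamma delta epsilon Ha Hg Hd.
  split; [split; [apply hom_part | apply inj_part; assumption]|].
  intros Hemb a b c d e a' b' c' d' e' H1 H2 H3 H4 H5 H6.
  destruct (Hemb a b c d e H1 H2 H3) as [f [Hf If]].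
  exists (fun x => embed_map a' b' c' d' e' (f x)). split.
  - intros x y. cbn. rewrite Hf. apply hom_part.
  - intros x y Hxy. apply If. exact (inj_part a' b' c' d' e' H4 H5 H6 _ _ Hxy).
Qed.
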